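(* Consider the network $\Sigma$ described in the context. The following assertions are equivalent: (i) $\Sigma$ is well-posed. (ii) $\Sigma$ is well-posed and there exist $C>0$ and $\kappa\in\mathcal{K}_\infty$ such that for all $x\in X$ and $u\in U$, $|f(x,u)|_\infty \le C+\kappa(|x|_\infty)+\kappa(|u|_\infty)$. (iii) There exist $C>0$ and $\kappa\in\mathcal{K}_\infty$ such that for all $i\in\mathbb{N}$ and all $x_i\in\mathbb{R}^{n_i}$, $\bar x_i\in X(I_i)$, $u_i\in\mathbb{R}^{p_i}$, $|f_i(x_i,\bar x_i,u_i)| \le C+\kappa(|x_i|)+\kappa(|\bar x_i|)+\kappa(|u_i|)$.
   Context: Let $\mathbb{N}=\{1,2,\dots\}$. For each $i\in\mathbb{N}$ fix positive integers $n_i,p_i$, norms $|\cdot|$ on $\mathbb{R}^{n_i}$ and on $\mathbb{R}^{p_i}$, and a finite set $I_i\subset\mathbb{N}\setminus\{i\}$, such that for every $i\in\mathbb{N}$ the set $\{j\in\mathbb{N}: i\in I_j\}$ is finite. Let $X(I_i):=\prod_{j\in I_i}\mathbb{R}^{n_j}$ with norm $|\bar x_i|:=\sup_{j\in I_i}|x_j|$ for $\bar x_i=(x_j)_{j\in I_i}$. For each $i$ let $f_i:\mathbb{R}^{n_i}\times X(I_i)\times\mathbb{R}^{p_i}\to\mathbb{R}^{n_i}$ be continuous (subsystem $\Sigma_i: x_i^+=f_i(x_i,\bar x_i,u_i)$). Let $X:=\{x=(x_i)_{i\in\mathbb{N}}: x_i\in\mathbb{R}^{n_i},\ \sup_i|x_i|<\infty\}$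 with norm $|x|_\infty:=\sup_i|x_i|$, and $U:=\{u=(u_i)_{i\in\mathbb{N}}: u_i\in\mathbb{R}^{p_i},\ \sup_i|u_i|<\infty\}$ with norm $|u|_\infty:=\sup_i|u_i|$. Let $X_E:=\prod_{i\in\mathbb{N}}\mathbb{R}^{n_i}$ and define $f:X_E\times U\to X_E$ by $f(x,u)_i:=f_i(x_i,(x_j)_{j\in I_i},u_i)$. The network $\Sigma$ is $x^+=f(x,u)$. $\Sigma$ is called well-posed if $f(x,u)\in X$ for all $x\in X$, $u\in U$. $\mathcal{K}_\infty$ denotes the continuous, strictly increasing, unbounded functions $\gamma:[0,\infty)\to[0,\infty)$ with $\gamma(0)=0$. *)

(* Defs.v *)
From HB Require Import structures.
From mathcomp Require Import all_boot all_order all_algebra.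
From mathcomp Require Import all_classical all_reals all_analysis.
Set Implicit Arguments. Unset Strict Implicit. Unset Printing Implicit Defensive.
Import Order.TTheory GRing.Theory Num.Theory numFieldNormedType.Exports.
Local Open Scope ring_scope.
Local Open Scope classical_set_scope.

Definition is_norm (R : realType) (m : nat) (N : 'rV[R]_m -> R) : Prop :=
  [/\ forall x, N x = 0 -> x = 0,
      forall (a : R) x, N (a *: x) = `|a| * N x &
      forall x y, N (x + y) <= N x + N y].

(* Class K_infinity (functions on [0,oo), represented on R). *)
Definition Kinf (R : realType) (k : R -> R) : Prop :=
  [/\ k 0 = 0,
      {within [set x : R | 0 <= x], continuous k},
      (forall x y, 0 <= x -> x < y -> k x < k y) &
      (forall M : R, exists r, 0 <= r /\ M < k r)].

Definition Xbar (R : realType) (n : nat -> nat) (I : seq nat) :=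
  forall j : seq_sub I, 'rV[R]_(n (ssval j)).

Definition xbar_norm (R : realType) (n : nat -> nat)
  (N : forall k, 'rV[R]_(n k) -> R) (I : seq nat) (xb : Xbar R n I) : R :=
  \big[Num.max/0]_(j : seq_sub I) N (ssval j) (xb j).

Definition restrict (R : realType) (n : nat -> nat) (I : seq nat)
  (x : forall k, 'rV[R]_(n k)) : Xbar R n I := fun j => x (ssval j).

(* x is an element of the l^infty-type space (bounded sequence of norms) *)
Definition bounded_seq (R : realType) (d : nat -> nat)
  (N : forall k, 'rV[R]_(d k) -> R) (x : forall k, 'rV[R]_(d k)) : Prop :=
  exists M : R, forall k, N k (x k) <= M.

Definition supnorm (R : realType) (d : nat -> nat)
  (N : forall k, 'rV[R]_(d k) -> R) (x : forall k, 'rV[R]_(d k)) : R :=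
  sup (range (fun k => N k (x k))).

Definition net_f (R : realType) (n p : nat -> nat) (I : nat -> seq nat)
  (F : forall i, 'rV[R]_(n i) -> Xbar R n (I i) -> 'rV[R]_(p i) -> 'rV[R]_(n i))
  (x : forall k, 'rV[R]_(n k)) (u : forall k, 'rV[R]_(p k)) :
  forall k, 'rV[R]_(n k) :=
  fun i => F i (x i) (@restrict R n (I i) x) (u i).

Definition well_posed (R : realType) (n p : nat -> nat) (I : nat -> seq nat)
  (N : forall k, 'rV[R]_(n k) -> R) (Nu : forall k, 'rV[R]_(p k) -> R)
  (F : forall i, 'rV[R]_(n i) -> Xbar R n (I i) -> 'rV[R]_(p i) -> 'rV[R]_(n i))
  : Prop :=
  forall x u, bounded_seq N x -> bounded_seq Nu u -> bounded_seq N (net_f F x u).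

Definition cont_sub (R : realType) (n p : nat -> nat) (I : nat -> seq nat)
  (N : forall k, 'rV[R]_(n k) -> R) (Nu : forall k, 'rV[R]_(p k) -> R) (i : nat)
  (Fi : 'rV[R]_(n i) -> Xbar R n (I i) -> 'rV[R]_(p i) -> 'rV[R]_(n i)) : Prop :=
  forall x xb u (e : R), 0 < e -> exists2 d : R, 0 < d &
    forall x' xb' u', N i (x - x') < d ->
      xbar_norm N (fun j => xb j - xb' j) < d -> Nu i (u - u') < d ->
      N i (Fi x xb u - Fi x' xb' u') < e.

(* Main.v *)
Require Import Defs.
From HB Require Import structures.
From mathcomp Require Import all_boot all_order all_algebra.
From mathcomp Require Import all_classical all_reals all_analysis.
From mathcomp Require Import lra.
Set Implicit Arguments. Unset Strict Implicit. Unset Printing Implicit Defensive.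
Import Order.TTheory GRing.Theory Num.Theory numFieldNormedType.Exports.
Local Open Scope ring_scope.
Local Open Scope classical_set_scope.
Import ArrowAsProduct.

Lemma nrm0 (R : realType) m (N : 'rV[R]_m -> R) : is_norm N -> N 0 = 0.
Proof.
case=> _ hZ _; have := hZ 0 0; rewrite scale0r normr0 mul0r; exact.
Qed.

Lemma nrmN (R : realType) m (N : 'rV[R]_m -> R) x : is_norm N -> N (- x) = N x.
Proof.
move=> hN; case: (hN) => _ hZ _; have := hZ (-1) x.
by rewrite scaleN1r normrN normr1 mul1r.
Qed.

Lemma nrm_ge0 (R : realType) m (N : 'rV[R]_m -> R) x : is_norm N -> 0 <= N x.
Proof.
move=> hN; case: (hN) => _ _ hD; have := hD x (- x).
rewrite subrr nrm0 // nrmN //; move=> h.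
have : 0 <= N x *+ 2 by rewrite mulr2n.
by rewrite pmulrn_lge0.
Qed.

Lemma nrm_dist (R : realType) m (N : 'rV[R]_m -> R) x y : is_norm N ->
  `|N x - N y| <= N (x - y).
Proof.
move=> hN; case: (hN) => _ _ hD; rewrite ler_norml; apply/andP; split.
- have := hD (y - x) x; rewrite subrK -opprB nrmN //; lra.
- have := hD (x - y) y; rewrite subrK; lra.
Qed.

Definition csum (R : realType) m (y : 'rV[R]_m) : R := \sum_(c < m) `|y ord0 c|.

Lemma csum_ge0 (R : realType) m (y : 'rV[R]_m) : 0 <= csum y.
Proof. by apply: sumr_ge0 => c _. Qed.

Lemma coord_le_csum (R : realType) m (y : 'rV[R]_m) c : `|y ord0 c| <= csum y.
Proof.
rewrite /csum (bigD1 c) //= lerDl; exact: sumr_ge0.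
Qed.

Lemma nrm_ub (R : realType) m (N : 'rV[R]_m -> R) : is_norm N ->
  exists2 C, 0 <= C & forall y, N y <= C * csum y.
Proof.
move=> hN; case: (hN) => _ hZ hD.
exists (\sum_(c < m) N (delta_mx 0 c)); first by apply: sumr_ge0 => c _; exact: nrm_ge0.
move=> y; rewrite {1}(row_sum_delta y).
have h1 : forall (s : seq 'I_m), N (\sum_(j <- s) y 0 j *: delta_mx 0 j) <=
   \sum_(j <- s) `|y 0 j| * N (delta_mx 0 j).
  elim=> [|a s IH]; first by rewrite !big_nil nrm0.
  rewrite !big_cons; apply: le_trans (hD _ _) _; rewrite hZ; exact: lerD.
apply: le_trans (h1 _) _; rewrite /csum mulr_sumr; apply: ler_sum => c _.
rewrite mulrC; apply: ler_wpM2r => //.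
rewrite (bigD1 c) //= lerDl; apply: sumr_ge0 => j _; exact: nrm_ge0.
Qed.

Lemma csumB (R : realType) m (x y : 'rV[R]_m) : 
  (forall c, `|x ord0 c - y ord0 c| < 1) -> True.
Proof. by []. Qed.

Lemma csum_small (R : realType) m (x y : 'rV[R]_m) d :
  (forall c, `|x ord0 c - y ord0 c| < d) -> csum (x - y) <= m%:R * d.
Proof.
move=> h; rewrite /csum.
have -> : m%:R * d = \sum_(c < m) d by rewrite sumr_const card_ord mulr_natl.
apply: ler_sum => c _; rewrite !mxE; exact/ltW/h.
Qed.


Lemma rV_near (R : realType) m (x : 'rV[R]_m) d : 0 < d ->
  nbhs x [set y : 'rV[R]_m | forall c, `|x ord0 c - y ord0 c| < d].
Proof.
move=> d0; apply/nbhs_ballP; exists d => // y [_ Hy] c.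
by have := Hy ord0 c.
Qed.

Lemma rV_cont (R : realType) m (f : 'rV[R]_m -> R) :
  (forall (x : 'rV[R]_m) (e : R), 0 < e -> exists2 d : R, 0 < d & forall y : 'rV[R]_m,
     (forall c, `|x ord0 c - y ord0 c| < d) -> `|f x - f y| < e) ->
  continuous f.
Proof.
move=> H x. have FF : Filter (nbhs x) by exact: nbhs_filter.
apply/cvgrPdist_lt => e e0; have [d d0 Hd] := H x e e0.
near=> y; apply: Hd; near: y; exact: rV_near.
Unshelve. all: by end_near.
Qed.

Lemma N_near (R : realType) m (N : 'rV[R]_m -> R) (x : 'rV[R]_m) d :
  is_norm N -> 0 < d -> nbhs x [set y : 'rV[R]_m | N (x - y) < d].
Proof.
move=> hN d0; have [C C0 HC] := nrm_ub hN.
have d'0 : 0 < d / (C * m%:R + 1).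
  by apply: divr_gt0 => //; apply: ltr_wpDl => //; apply: mulr_ge0.
apply: filterS (rV_near x d'0) => y Hy.
apply: le_lt_trans (HC _) _.
apply: le_lt_trans (ler_wpM2l C0 (csum_small Hy)) _.
have K0 : 0 < C * m%:R + 1 by apply: ltr_wpDl => //; apply: mulr_ge0.
rewrite mulrA mulrC mulrAC ltr_pdivrMr // [m%:R * d]mulrC -mulrA ltr_pM2l // mulrC.
by rewrite ltrDl.
Qed.

Lemma N_cont (R : realType) m (N : 'rV[R]_m -> R) : is_norm N -> continuous N.
Proof.
move=> hN x. have FF : Filter (nbhs x) by exact: nbhs_filter.
apply/cvgrPdist_lt => e e0.
apply: filterS (N_near x hN e0) => y Hy.
exact: le_lt_trans (nrm_dist _ _ hN) Hy.
Qed.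

Lemma cont_compact_bound (R : realType) (T : topologicalType) (A : set T) (g : T -> R) :
  continuous g -> compact A -> exists B, forall y, A y -> `|g y| <= B.
Proof.
move=> gc Ac.
have : compact [set g x | x in A].
  by apply: continuous_compact => //; exact: continuous_subspaceT.
move=> /compact_bounded [M [_ HM]].
exists (`|M| + 1) => y Ay; apply: (HM (`|M| + 1)).
  by apply: le_lt_trans (ler_norm M) _; rewrite ltrDl.
by exists y.
Qed.

Lemma cube_compact (R : realType) m (r : R) :
  compact [set v : 'rV[R]_m | forall c, `|v ord0 c| <= r].
Proof.
have := @rV_compact _ m (fun=> `[-r, r]%classic) (fun=> @segment_compact R _ _).
congr compact; apply/seteqP; split => v /= h c; have := h c; rewrite /= in_itv /=;
  by rewrite ler_norml.
Qed.

Lemma cube_bound (R : realType) m (g : 'rV[R]_m -> R) (r : R) : continuous g ->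
  exists B : R, forall y : 'rV[R]_m, (forall c, `|y ord0 c| <= r) -> `|g y| <= B.
Proof. move=> gc; exact: (cont_compact_bound gc (@cube_compact R m r)). Qed.


Lemma csum_norm (R : realType) m : is_norm (@csum R m).
Proof.
split.
- move=> x /eqP; rewrite /csum psumr_eq0; last by move=> c _.
  move=> /allP h; apply/rowP => c; rewrite mxE.
  by have := h c (mem_index_enum _); rewrite implyTb normr_eq0 => /eqP.
- move=> a x; rewrite /csum mulr_sumr; apply: eq_bigr => c _.
  by rewrite mxE normrM.
- move=> x y; rewrite /csum -big_split /=; apply: ler_sum => c _.
  by rewrite mxE ler_normD.
Qed.

Lemma nrm_eq0 (R : realType) m (N : 'rV[R]_m -> R) x : is_norm N -> N x = 0 -> x = 0.
Proof. by case=> h _ _; apply: h. Qed.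

Lemma nrm_lb (R : realType) m (N : 'rV[R]_m -> R) : is_norm N ->
  exists2 c : R, 0 < c & forall (y : 'rV[R]_m) i, `|y ord0 i| <= c * N y.
Proof.
move=> hN.
pose h := fun y : 'rV[R]_m => N y + `|1 - csum y|.
have hpos : forall y, 0 < h y.
  move=> y; rewrite /h; have := nrm_ge0 y hN; have := normr_ge0 (1 - csum y).
  rewrite le0r => /orP[/eqP H0|]; last by move=> *; apply: ltr_wpDl.
  rewrite le0r => /orP[/eqP Ny0|]; last by move=> *; apply: ltr_pwDl.
  have y0 := nrm_eq0 hN Ny0; move: H0; rewrite y0 /csum big1 ?subr0 ?normr1.
    by move=> /eqP; rewrite oner_eq0.
  by move=> c _; rewrite mxE normr0.
have qc : continuous (fun y => (h y)^-1).
  move=> x; have FF : Filter (nbhs x) by exact: nbhs_filter.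
  apply: cvgV; first by rewrite gt_eqF.
  apply: cvgD; first exact: N_cont.
  apply: cvg_norm; apply: cvgB; first exact: cvg_cst.
  exact: N_cont (@csum_norm R m) x.
have [B HB] := cube_bound 1 qc.
exists (`|B| + 1); first by apply: ltr_pwDr => //.
move=> y i.
have [y0|yn0] := eqVneq y 0.
  by rewrite y0 mxE normr0 nrm0 // mulr0.
set s := csum y.
have s0 : 0 < s.
  rewrite lt0r csum_ge0 andbT; apply/eqP => s0; apply: (negP yn0); apply/eqP.
  exact: nrm_eq0 (@csum_norm R m) s0.
pose y' := s^-1 *: y.
have cs' : csum y' = 1.
  case: (@csum_norm R m) => _ hZ _; rewrite hZ -/s ger0_norm ?mulVf ?gt_eqF //.
  by rewrite invr_ge0 ltW.
have Hy' := HB y' (fun c => le_trans (coord_le_csum y' c) (ltac:(by rewrite cs') : csum y' <= 1)).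
move: Hy'; rewrite /h cs' subrr normr0 addr0.
have Ny' : N y' = s^-1 * N y by case: hN => _ hZ _; rewrite hZ ger0_norm // invr_ge0 ltW.
have Npos : 0 < N y.
  rewrite lt0r nrm_ge0 // andbT; apply/eqP => Ny0; apply: (negP yn0); apply/eqP.
  exact: nrm_eq0 hN Ny0.
rewrite Ny' ger0_norm; last by rewrite invr_ge0 mulr_ge0 // ?invr_ge0 ?ltW.
rewrite invfM invrK => HB'.
apply: le_trans (coord_le_csum y i) _.
have : s <= B * N y by rewrite -ler_pdivrMr // mulrC.
move=> H; apply: le_trans H _; apply: ler_wpM2r; first exact: ltW.
by apply: le_trans (ler_norm B) _; rewrite lerDl.
Qed.


Lemma near_pair (T U : topologicalType) (a : T) (b : U) (P : set T) (Q : set U) :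
  nbhs a P -> nbhs b Q -> nbhs (a, b) [set w | P w.1 /\ Q w.2].
Proof. move=> hP hQ; exists (P, Q) => //= -[w1 w2] [/= ? ?]; by split. Qed.

Lemma xbar_le (R : realType) (n : nat -> nat) (N : forall k, 'rV[R]_(n k) -> R)
  (J : seq nat) (xb : Xbar R n J) j : N (ssval j) (xb j) <= xbar_norm N xb.
Proof. rewrite /xbar_norm; exact: (le_bigmax _ (fun j => N (ssval j) (xb j))). Qed.

Lemma xbar_ge0 (R : realType) (n : nat -> nat) (N : forall k, 'rV[R]_(n k) -> R)
  (J : seq nat) (xb : Xbar R n J) : 0 <= xbar_norm N xb.
Proof.
rewrite /xbar_norm; elim/big_rec: _ => // j acc _ hacc.
by rewrite le_max hacc orbT.
Qed.

Lemma xbar_leP (R : realType) (n : nat -> nat) (N : forall k, 'rV[R]_(n k) -> R)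
  (J : seq nat) (xb : Xbar R n J) r : 0 <= r -> (forall j, N (ssval j) (xb j) <= r) ->
  xbar_norm N xb <= r.
Proof. by move=> r0 h; rewrite /xbar_norm; apply: bigmax_le. Qed.

Lemma xbar_ltP (R : realType) (n : nat -> nat) (N : forall k, 'rV[R]_(n k) -> R)
  (J : seq nat) (xb : Xbar R n J) r : 0 < r -> (forall j, N (ssval j) (xb j) < r) ->
  xbar_norm N xb < r.
Proof. by move=> r0 h; rewrite /xbar_norm; apply: bigmax_lt. Qed.

Lemma pi_near (R : realType) (n : nat -> nat) (J : seq nat)
  (N : forall k, 'rV[R]_(n k) -> R) : (forall k, is_norm (N k)) ->
  forall (x : forall j : seq_sub J, 'rV[R]_(n (ssval j))) (d : R), 0 < d ->
  nbhs x [set w : forall j : seq_sub J, 'rV[R]_(n (ssval j)) |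
     forall j, N (ssval j) (x j - w j) < d].
Proof.
move=> hN x d d0; have FF : Filter (nbhs x) by exact: nbhs_filter.
apply: (@filter_forall _ _ (fun j (w : forall j : seq_sub J, 'rV[R]_(n (ssval j))) => N (ssval j) (x j - w j) < d) _ FF) => j.
have := @proj_continuous _ (fun j : seq_sub J => 'rV[R]_(n (ssval j))) j x _ (N_near (x j) (hN _) d0). exact.
Qed.

Lemma sub_bound (R : realType) (n p : nat -> nat)
  (N : forall i, 'rV[R]_(n i) -> R) (Nu : forall i, 'rV[R]_(p i) -> R)
  (I : nat -> seq nat) i
  (Fi : 'rV[R]_(n i) -> Xbar R n (I i) -> 'rV[R]_(p i) -> 'rV[R]_(n i)) :
  (forall k, is_norm (N k)) -> is_norm (Nu i) -> cont_sub N Nu Fi ->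
  forall r : R, exists B : R, forall x xb u, N i x <= r -> xbar_norm N xb <= r ->
     Nu i u <= r -> N i (Fi x xb u) <= B.
Proof.
move=> hN hNu hF r.
have /choice [cN hcN] : forall k, exists c : R, 0 < c /\
    forall (y : 'rV[R]_(n k)) c', `|y ord0 c'| <= c * N k y.
  by move=> k; have [c c0 hc] := nrm_lb (hN k); exists c.
have [cu cu0 hcu] := nrm_lb hNu.
have h1 := @cube_compact R (n i) (cN i * r).
have h3 := @cube_compact R (p i) (cu * r).
have h2 := @tychonoff _ (fun j : seq_sub (I i) => 'rV[R]_(n (ssval j)))
   (fun j => [set v : 'rV[R]_(n (ssval j)) | forall c, `|v ord0 c| <= cN (ssval j) * r])
   (fun j => @cube_compact R _ _).
have Ac := compact_setX h1 (compact_setX h2 h3).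
have gc : continuous (fun z : 'rV[R]_(n i) * ((forall j : seq_sub (I i), 'rV[R]_(n (ssval j))) * 'rV[R]_(p i)) => N i (Fi z.1 z.2.1 z.2.2)).
  move=> z; have FF : Filter (nbhs z) by exact: nbhs_filter.
  apply/cvgrPdist_lt => e e0.
  have [d d0 hd] := hF z.1 z.2.1 z.2.2 e e0.
  have H1 : nbhs z.2.1 [set w : forall j : seq_sub (I i), 'rV[R]_(n (ssval j)) |
      xbar_norm N (fun j => z.2.1 j - w j) < d].
    have FF' : Filter (nbhs (z.2.1 : forall j : seq_sub (I i), 'rV[R]_(n (ssval j)))).
      exact: nbhs_filter.
    have := pi_near hN z.2.1 d0.
    by apply: filterS => w hw; apply: xbar_ltP.
  have := near_pair (N_near z.1 (hN i) d0) (near_pair H1 (N_near z.2.2 hNu d0)).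
  clear FF; case: z hd H1 => z1 [z2 z3] /= hd _.
  apply: filterS => -[w1 [w2 w3]] /= [k1 [k2 k3]].
  apply: le_lt_trans (nrm_dist _ _ (hN i)) _.
  exact: hd.
have [B HB] := cont_compact_bound gc Ac.
exists B => x xb u hx hxb hu.
have hr : 0 <= r by apply: le_trans hx; exact: nrm_ge0.
apply: le_trans (ler_norm _) _.
apply: (HB (x, (xb, u))); split; [|split] => /=.
- move=> c; have [c0 hc] := hcN i; apply: le_trans (hc x c) _.
  by apply: ler_wpM2l => //; apply: ltW.
- move=> j c; have [c0 hc] := hcN (ssval j); apply: le_trans (hc (xb j) c) _.
  apply: ler_wpM2l; first exact: ltW.
  exact: le_trans (xbar_le N xb j) hxb.
- move=> c; apply: le_trans (hcu u c) _.
  by apply: ler_wpM2l => //; apply: ltW.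
Qed.


Lemma extend_x (R : realType) (n : nat -> nat) (N : forall k, 'rV[R]_(n k) -> R)
  (I : nat -> seq nat) i : (forall k, is_norm (N k)) -> i \notin I i ->
  forall (x : 'rV[R]_(n i)) (xb : Xbar R n (I i)),
  exists y : forall k, 'rV[R]_(n k),
    [/\ y i = x, @Defs.restrict R n (I i) y = xb &
        forall k, N k (y k) <= Num.max (N i x) (xbar_norm N xb)].
Proof.
move=> hN hi x xb.
pose base := @eqtype.dfwith nat (fun k => 'rV[R]_(n k)) (fun k => 0) i x.
pose y := fun s : seq (seq_sub (I i)) =>
  foldr (fun j acc => @eqtype.dfwith nat (fun k => 'rV[R]_(n k)) acc (ssval j) (xb j)) base s.
have yout : forall s k, (forall j, j \in s -> ssval j != k) -> y s k = base k.
  elim=> [//|a s IH] k hk; rewrite /y /= -/(y s). rewrite eqtype.dfwith_out; last by apply: hk; rewrite inE eqxx.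
  by apply: IH => j js; apply: hk; rewrite inE js orbT.
have yin : forall s j, j \in s -> y s (ssval j) = xb j.
  elim=> [//|a s IH] j; rewrite /y /= -/(y s) inE => /orP[/eqP ->|js]; first by rewrite eqtype.dfwith_in.
  have [<-|ne] := eqVneq a j; first by rewrite eqtype.dfwith_in.
  rewrite eqtype.dfwith_out; first exact: IH.
  by apply: contra ne => /eqP/val_inj ->.
have hM : 0 <= Num.max (N i x) (xbar_norm N xb).
  by rewrite le_max xbar_ge0 orbT.
have ybd : forall s k, N k (y s k) <= Num.max (N i x) (xbar_norm N xb).
  elim=> [|a s IH] k; rewrite /y /=; last rewrite -/(y s).
    rewrite /base; case: eqtype.dfwithP => [|j _]; first by rewrite le_max lexx.
    by rewrite nrm0.
  case: eqtype.dfwithP => [|j _]; last exact: IH.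
  by rewrite le_max xbar_le orbT.
exists (y (index_enum (seq_sub (I i)))); split.
- rewrite yout; first by rewrite /base eqtype.dfwith_in.
  move=> j _; apply: contra hi => /eqP ji; rewrite -{1}ji; exact: ssvalP.
- apply: functional_extensionality_dep => j; rewrite /Defs.restrict.
  by apply: yin; rewrite mem_index_enum.
- by move=> k; apply: ybd.
Qed.

Lemma extend_u (R : realType) (p : nat -> nat) (Nu : forall k, 'rV[R]_(p k) -> R)
  i : (forall k, is_norm (Nu k)) -> forall (u : 'rV[R]_(p i)),
  exists v : forall k, 'rV[R]_(p k), v i = u /\ forall k, Nu k (v k) <= Nu i u.
Proof.
move=> hN u; exists (@eqtype.dfwith nat (fun k => 'rV[R]_(p k)) (fun k => 0) i u).
split; first by rewrite eqtype.dfwith_in.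
move=> k; case: eqtype.dfwithP => [|j _]; first exact: lexx.
by rewrite nrm0 // nrm_ge0.
Qed.


Lemma unif_bound (R : realType) (n p : nat -> nat)
  (N : forall i, 'rV[R]_(n i) -> R) (Nu : forall i, 'rV[R]_(p i) -> R)
  (I : nat -> seq nat)
  (F : forall i, 'rV[R]_(n i) -> Xbar R n (I i) -> 'rV[R]_(p i) -> 'rV[R]_(n i)) :
  (forall i, is_norm (N i)) -> (forall i, is_norm (Nu i)) ->
  (forall i, i \notin I i) ->
  (forall i, exists m, forall j, i \in I j -> (j < m)%N) ->
  (forall i, cont_sub N Nu (F i)) ->
  well_posed N Nu F ->
  forall r : R, exists B : R, forall i x xb u, N i x <= r -> xbar_norm N xb <= r ->
     Nu i u <= r -> N i (F i x xb u) <= B.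
Proof.
move=> hN hNu hI hfin hF hwp r.
apply: contrapT => hno.
have hno' : forall B : R, exists i x xb u, [/\ N i x <= r, xbar_norm N xb <= r,
    Nu i u <= r & B < N i (F i x xb u)].
  move=> B; apply: contrapT => hB; apply: hno; exists B => i x xb u h1 h2 h3.
  rewrite leNgt; apply/negP => hlt; apply: hB; by exists i, x, xb, u.
have /choice [bi hbi] : forall i, exists b : R, forall x xb u, N i x <= r ->
    xbar_norm N xb <= r -> Nu i u <= r -> N i (F i x xb u) <= b.
  move=> i; exact: sub_bound.
have /choice [Mb hMb] := hfin.
pose L := fun m : nat => maxn m (\max_(t < m) Mb t).
have G : forall mk : nat * nat, exists z : nat * ((forall t, 'rV[R]_(n t)) * (forall t, 'rV[R]_(p t))),
   [/\ (L mk.1 <= z.1)%N, forall t, N t (z.2.1 t) <= r, forall t, Nu t (z.2.2 t) <= r &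
       mk.2%:R < N z.1 (F z.1 (z.2.1 z.1) (@Defs.restrict R n (I z.1) z.2.1) (z.2.2 z.1))].
  case=> m k /=.
  have [i [x [xb [u [h1 h2 h3 h4]]]]] :=
     hno' (Num.max k%:R (\big[Num.max/0]_(t < L m) bi t)).
  have hr : 0 <= r by apply: le_trans h1; exact: nrm_ge0.
  have [y [hyi hyr hyb]] := extend_x (hN) (hI i) x xb.
  have [v [hvi hvb]] := extend_u hNu u.
  exists (i, (y, v)) => /=; split.
  - rewrite leqNgt; apply/negP => iL.
    have := hbi i x xb u h1 h2 h3.
    have : bi i <= \big[Num.max/0]_(t < L m) bi t.
      exact: (le_bigmax _ (fun t : 'I_(L m) => bi t) (Ordinal iL)).
    move: h4; rewrite gt_max => /andP[_ hb] hle hbi'.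
    have := lt_le_trans hb (le_trans hbi' hle); by rewrite ltxx.
  - by move=> t; apply: le_trans (hyb t) _; rewrite ge_max h1 h2.
  - by move=> t; apply: le_trans (hvb t) _.
  - rewrite hyi hyr hvi; apply: le_lt_trans h4; by rewrite le_max lexx.
have /choice [ch hch] := G.
pose ci := fun m k => (ch (m, k)).1.
pose cy := fun m k => (ch (m, k)).2.1.
pose cv := fun m k => (ch (m, k)).2.2.
pose next := fun m k => (maxn (ci m k) (\max_(j <- I (ci m k)) j)).+1.
pose ms := fix f (k : nat) : nat := match k with 0 => 0%N | k'.+1 => next (f k') k' end.
have msS : forall k, ms k.+1 = next (ms k) k by [].
pose ik := fun k => ci (ms k) k.
have hA : forall k, (ms k <= ik k < ms k.+1)%N.
  move=> k; have [h1 _ _ _] := hch (ms k, k); apply/andP; split.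
    exact: leq_trans (leq_maxl _ _) h1.
  by rewrite msS /next ltnS leq_maxl.
have hB : forall k j, j \in I (ik k) -> (ms k <= j < ms k.+1)%N.
  move=> k j jI; apply/andP; split; last first.
    rewrite msS /next ltnS; apply: leq_trans (leq_maxr _ _).
    exact: (@leq_bigmax_seq _ _ xpredT (fun j => j) j jI).
  rewrite leqNgt; apply/negP => jm.
  have h1 := hMb j (ik k) jI.
  have [h2 _ _ _] := hch (ms k, k).
  have h3 : (Mb j <= \max_(t < ms k) Mb t)%N.
    exact: (@leq_bigmax_cond _ xpredT (fun t : 'I_(ms k) => Mb t) (Ordinal jm)).
  have : (ik k < ik k)%N.
    apply: (leq_trans h1); apply: (leq_trans h3); apply: leq_trans (leq_maxr _ _) h2.
  by rewrite ltnn.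
have hinc : forall k, (ms k < ms k.+1)%N.
  by move=> k; have /andP[a b] := hA k; exact: leq_ltn_trans a b.
have hmono : forall a d, (ms a <= ms (a + d))%N.
  move=> a; elim=> [|d IH]; first by rewrite addn0.
  by rewrite addnS; apply: leq_trans IH (ltnW (hinc _)).
have hge : forall k, (k <= ms k)%N.
  by elim=> [//|k IH]; apply: leq_ltn_trans IH (hinc k).
have hex : forall t, exists k, (t < ms k.+1)%N.
  by move=> t; exists t; apply: leq_ltn_trans (hge t) (hinc t).
pose own := fun t => ex_minn (hex t).
have own_eq : forall t k, (ms k <= t < ms k.+1)%N -> own t = k.
  move=> t k /andP[h1 h2]; rewrite /own; case: ex_minnP => o Po Hmin.
  apply/eqP; rewrite eqn_leq Hmin //=; rewrite leqNgt; apply/negP => ok.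
  have := hmono o.+1 (k - o.+1)%N; rewrite subnKC // => h3.
  have := leq_ltn_trans (leq_trans h3 h1) Po; by rewrite ltnn.
pose X := fun t => cy (ms (own t)) (own t) t.
pose U := fun t => cv (ms (own t)) (own t) t.
have bX : bounded_seq N X.
  exists r => t; rewrite /X; by have [_ h _ _] := hch (ms (own t), own t); apply: h.
have bU : bounded_seq Nu U.
  exists r => t; rewrite /U; by have [_ _ h _] := hch (ms (own t), own t); apply: h.
have [M HM] := hwp X U bX bU.
pose k := (Num.truncn M).+1.
have := HM (ik k); rewrite /net_f.
have e1 : X (ik k) = cy (ms k) k (ik k) by rewrite /X (own_eq _ k) //; exact: hA.
have e2 : U (ik k) = cv (ms k) k (ik k) by rewrite /U (own_eq _ k) //; exact: hA.
have e3 : @Defs.restrict R n (I (ik k)) X = @Defs.restrict R n (I (ik k)) (cy (ms k) k).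
  apply: functional_extensionality_dep => j; rewrite /Defs.restrict /X.
  by rewrite (own_eq _ k) //; apply: hB; exact: ssvalP.
rewrite e1 e2 e3.
have [_ _ _ h4] := hch (ms k, k).
move=> hle; have := lt_le_trans h4 hle.
have := truncnS_gt M; rewrite -/k => h5 h6.
by have := lt_trans h5 h6; rewrite ltxx.
Qed.


Definition ramp (R : realType) (t : R) : R :=
  if t <= 0 then 0 else if t <= 1 then t else 1.

Lemma ramp_ge0 (R : realType) (t : R) : 0 <= ramp t.
Proof. rewrite /ramp; case: (leP t 0) => h //; case: (leP t 1) => h' //; lra. Qed.

Lemma ramp0 (R : realType) (t : R) : t <= 0 -> ramp t = 0.
Proof. by rewrite /ramp => ->. Qed.

Lemma ramp1 (R : realType) (t : R) : 1 <= t -> ramp t = 1.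
Proof.
move=> h; rewrite /ramp; case: (leP t 0) => h1; first lra.
case: (leP t 1) => h2 //; lra.
Qed.

Lemma ramp_mono (R : realType) (a b : R) : a <= b -> 0 <= ramp b - ramp a <= b - a.
Proof.
move=> ab; rewrite /ramp.
by case: (leP a 0) => h1; case: (leP a 1) => h2; case: (leP b 0) => h3;
  case: (leP b 1) => h4; apply/andP; split; lra.
Qed.

Lemma ramp_lip (R : realType) (a b : R) : `|ramp a - ramp b| <= `|a - b|.
Proof.
have [ab|ba] := leP a b.
  have /andP[h1 h2] := ramp_mono ab.
  by rewrite distrC ger0_norm // [`|a - b|]distrC ger0_norm // subr_ge0.
have /andP[h1 h2] := ramp_mono (ltW ba).
by rewrite ger0_norm // ger0_norm // subr_ge0 ltW.
Qed.

Definition Ssum (R : realType) (e : nat -> R) (s : R) (K : nat) : R :=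
  \sum_(0 <= k < K) e k * ramp (s - k%:R).

Lemma Ssum_ext (R : realType) (e : nat -> R) (s : R) K1 K2 :
  s <= K1%:R -> s <= K2%:R -> Ssum e s K1 = Ssum e s K2.
Proof.
wlog le12 : K1 K2 / (K1 <= K2)%N.
  move=> W h1 h2; have [le|lt] := leqP K1 K2; first exact: W.
  by symmetry; apply: W => //; exact: ltnW.
move=> h1 h2; rewrite /Ssum (@big_cat_nat _ _ _ K1 0 K2 _ _ (leq0n K1) le12) /=.
rewrite [X in _ + X]big1_seq ?addr0 // => k /andP[_]; rewrite mem_index_iota => /andP[hk _].
rewrite ramp0 ?mulr0 //; rewrite subr_le0; apply: le_trans h1 _.
by rewrite ler_nat.
Qed.

Lemma Ssum_ge0 (R : realType) (e : nat -> R) (s : R) K :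
  (forall k, 0 <= e k) -> 0 <= Ssum e s K.
Proof. by move=> he; apply: sumr_ge0 => k _; apply: mulr_ge0 => //; exact: ramp_ge0. Qed.

Lemma Ssum_mono (R : realType) (e : nat -> R) (s t : R) K :
  (forall k, 0 <= e k) -> s <= t -> Ssum e s K <= Ssum e t K.
Proof.
move=> he st; apply: ler_sum => k _; apply: ler_wpM2l => //.
have /andP[h _] := ramp_mono (lerB st (lexx k%:R)); by rewrite -subr_ge0.
Qed.

Lemma Ssum_term (R : realType) (e : nat -> R) (s : R) K j :
  (forall k, 0 <= e k) -> (j < K)%N -> e j * ramp (s - j%:R) <= Ssum e s K.
Proof.
move=> he jK; rewrite /Ssum big_mkord (bigD1 (Ordinal jK)) //= lerDl.
by apply: sumr_ge0 => k _; apply: mulr_ge0 => //; exact: ramp_ge0.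
Qed.

Lemma Ssum_lip (R : realType) (e : nat -> R) (s t : R) K :
  (forall k, 0 <= e k) -> `|Ssum e s K - Ssum e t K| <= `|s - t| * \sum_(0 <= k < K) e k.
Proof.
move=> he; rewrite /Ssum -sumrB mulr_sumr.
apply: le_trans (ler_norm_sum _ _ _) _; apply: ler_sum => k _.
rewrite -mulrBr normrM ger0_norm // mulrC; apply: ler_wpM2r => //.
by apply: le_trans (ramp_lip _ _) _; rewrite opprB addrA subrK.
Qed.

Lemma R_near (R : realType) (s0 d : R) : 0 < d -> nbhs s0 [set s : R | `|s0 - s| < d].
Proof. by move=> d0; apply/nbhs_ballP; exists d => // s; rewrite /ball /=. Qed.

Lemma mkKinf (R : realType) (b : nat -> R) : exists k : R -> R,
  [/\ Kinf k, (forall s, 0 <= s -> 0 <= k s),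
      (forall s t, 0 <= s -> s <= t -> k s <= k t) &
      (forall s, 1 <= s -> b (Num.truncn s).+1 <= k s)].
Proof.
pose e := fun k : nat => Num.max 0 (b k.+2).
have he : forall k, 0 <= e k by move=> k; rewrite le_max lexx.
pose kap := fun s : R => s + Ssum e s (Num.truncn s).+1.
have kE : forall s K, s <= K%:R -> kap s = s + Ssum e s K.
  move=> s K sK; by rewrite /kap (Ssum_ext e (ltW (truncnS_gt s)) sK).
have k0 : kap 0 = 0 by rewrite (kE 0 0%N) // /Ssum big_geq // addr0.
have kmono : forall s t, s <= t -> kap s <= kap t.
  move=> s t st; rewrite (kE s (Num.truncn t).+1); last first.
    exact: le_trans st (ltW (truncnS_gt t)).
  rewrite (kE t (Num.truncn t).+1); last exact: ltW (truncnS_gt t).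
  by apply: lerD => //; apply: Ssum_mono.
have kge : forall s, 0 <= s -> s <= kap s.
  by move=> s s0; rewrite /kap lerDl; apply: Ssum_ge0.
exists kap; split.
- split => //.
  + apply: continuous_subspaceT => x.
    apply/cvgrPdist_lt => eps eps0.
    pose K := (Num.truncn (x + 1)).+1.
    pose E := \sum_(0 <= k < K) e k.
    have E0 : 0 <= E by apply: sumr_ge0 => k _.
    have E1 : 0 < 1 + E by apply: ltr_pwDl.
    pose d := Num.min 1 (eps / (1 + E)).
    have d0 : 0 < d by rewrite lt_min ltr01 /= divr_gt0.
    apply: filterS (R_near x d0) => s /= hs.
    have hs1 : `|x - s| < 1 by apply: lt_le_trans hs _; rewrite ge_min lexx.
    have hs2 : `|x - s| < eps / (1 + E).
      by apply: lt_le_trans hs _; rewrite ge_min lexx orbT.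
    have xK : x <= K%:R by apply: le_trans (ltW (truncnS_gt (x + 1))); lra.
    have sK : s <= K%:R.
      apply: le_trans (ltW (truncnS_gt (x + 1))); move: hs1; rewrite ltr_norml; lra.
    rewrite (kE x K xK) (kE s K sK).
    have -> : x + Ssum e x K - (s + Ssum e s K) = (x - s) + (Ssum e x K - Ssum e s K).
      by rewrite opprD addrACA.
    apply: le_lt_trans (ler_normD _ _) _.
    apply: le_lt_trans (lerD (lexx _) (Ssum_lip _ _ _ he)) _.
    rewrite -[X in X + _]mulr1 -mulrDr mulrC -ltr_pdivlMl // mulrC; exact: hs2.
  + move=> x y x0 xy; rewrite (kE x (Num.truncn y).+1); last first.
      exact: le_trans (ltW xy) (ltW (truncnS_gt y)).
    rewrite (kE y (Num.truncn y).+1); last exact: ltW (truncnS_gt y).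
    by apply: ltr_leD => //; apply: Ssum_mono => //; exact: ltW.
  + move=> M; exists (`|M| + 1); split; first by apply: addr_ge0.
    apply: lt_le_trans (kge _ _); last by apply: addr_ge0.
    by apply: le_lt_trans (ler_norm M) _; rewrite ltrDl.
- move=> s s0; apply: le_trans s0 (kge _ s0).
- by move=> s t _; exact: kmono.
- move=> s s1.
  have s0 : 0 <= s by apply: le_trans s1; exact: ler01.
  set m := Num.truncn s.
  have m0 : (0 < m)%N by rewrite truncn_gt0.
  have hS : Ssum e s m.+1 <= kap s by rewrite /kap -/m; apply: ler_wpDl s0 _.
  apply: le_trans hS; apply: le_trans (Ssum_term s he (leq_ltn_trans (leq_pred m) (ltnSn m))).
  rewrite ramp1; last first.
    have hm : m%:R <= s by rewrite truncn_le.
    have e1 : (m.-1)%:R = (m%:R - 1 : R) by rewrite -[in RHS](prednK m0) mulrSr addrK.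
    rewrite e1; lra.
  by rewrite mulr1 /e prednK // le_max lexx orbT.
Qed.


Lemma Kinf_mono (R : realType) (k : R -> R) s t : Kinf k -> 0 <= s -> s <= t -> k s <= k t.
Proof.
case=> _ _ hm _ s0; rewrite le_eqVlt => /orP[/eqP->//|st].
exact/ltW/hm.
Qed.

Lemma Kinf_ge0 (R : realType) (k : R -> R) s : Kinf k -> 0 <= s -> 0 <= k s.
Proof. move=> hk s0; have [k0 _ _ _] := hk; rewrite -k0; exact: Kinf_mono. Qed.

Lemma Kinf_max (R : realType) (k : R -> R) a b : Kinf k -> 0 <= a -> 0 <= b ->
  k (Num.max a b) <= k a + k b.
Proof.
move=> hk a0 b0; have [ab|ba] := leP a b.
  rewrite lerDr; exact: Kinf_ge0.
rewrite lerDl; exact: Kinf_ge0.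
Qed.

Lemma supn_ge (R : realType) (d : nat -> nat) (N : forall k, 'rV[R]_(d k) -> R) x k :
  bounded_seq N x -> N k (x k) <= supnorm N x.
Proof.
move=> [M hM]; apply: ub_le_sup; last by exists k.
by exists M => _ [j _ <-].
Qed.

Lemma supn_le (R : realType) (d : nat -> nat) (N : forall k, 'rV[R]_(d k) -> R) x M :
  (forall k, N k (x k) <= M) -> supnorm N x <= M.
Proof.
move=> hM; apply: ge_sup; first by exists (N 0%N (x 0%N)), 0%N.
by move=> _ [j _ <-].
Qed.

Lemma key (R : realType) (n p : nat -> nat)
  (N : forall i, 'rV[R]_(n i) -> R) (Nu : forall i, 'rV[R]_(p i) -> R)
  (I : nat -> seq nat)
  (F : forall i, 'rV[R]_(n i) -> Xbar R n (I i) -> 'rV[R]_(p i) -> 'rV[R]_(n i)) :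
  (forall i, is_norm (N i)) -> (forall i, is_norm (Nu i)) ->
  (forall i, i \notin I i) ->
  (forall i, exists m, forall j, i \in I j -> (j < m)%N) ->
  (forall i, cont_sub N Nu (F i)) ->
  well_posed N Nu F ->
  exists (C : R) (k : R -> R), [/\ 0 < C, Kinf k &
     forall i x xb u, N i (F i x xb u) <=
        C + k (Num.max (N i x) (Num.max (xbar_norm N xb) (Nu i u)))].
Proof.
move=> hN hNu hI hfin hF hwp.
have /choice [Bm hBm] : forall m : nat, exists B : R, forall i x xb u,
    N i x <= m%:R -> xbar_norm N xb <= m%:R -> Nu i u <= m%:R -> N i (F i x xb u) <= B.
  by move=> m; apply: unif_bound.
have [k [hk k0 kmono kdom]] := mkKinf Bm.
exists (`|Bm 1%N| + 1), k; split => //.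
move=> i x xb u.
set s := Num.max _ _.
have s0 : 0 <= s by rewrite le_max nrm_ge0.
have hx : N i x <= s by rewrite le_max lexx.
have hxb : xbar_norm N xb <= s by rewrite /s !le_max lexx orbT.
have hu : Nu i u <= s by rewrite /s !le_max lexx !orbT.
have [s1|s1] := ltP s 1.
  have h := hBm 1%N i x xb u (le_trans hx (ltW s1)) (le_trans hxb (ltW s1)) (le_trans hu (ltW s1)).
  apply: le_trans h _; apply: ler_wpDr; first exact: k0.
  by apply: le_trans (ler_norm _) _; rewrite lerDl.
have sK : s <= (Num.truncn s).+1%:R by exact: ltW (truncnS_gt s).
have h := hBm (Num.truncn s).+1 i x xb u (le_trans hx sK) (le_trans hxb sK) (le_trans hu sK).
apply: le_trans h _; apply: le_trans (kdom _ s1) _.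
by apply: ler_wpDl; first by apply: addr_ge0.
Qed.

Unset Implicit Arguments.
Theorem lemma1 (R : realType) (n p : nat -> nat)
  (N : forall i, 'rV[R]_(n i) -> R) (Nu : forall i, 'rV[R]_(p i) -> R)
  (I : nat -> seq nat)
  (F : forall i, 'rV[R]_(n i) -> Xbar R n (I i) -> 'rV[R]_(p i) -> 'rV[R]_(n i)) :
  (forall i, (0 < n i)%N) -> (forall i, (0 < p i)%N) ->
  (forall i, is_norm (N i)) -> (forall i, is_norm (Nu i)) ->
  (forall i, i \notin I i) ->
  (forall i, exists m, forall j, i \in I j -> (j < m)%N) ->
  (forall i, cont_sub N Nu (F i)) ->
  (well_posed N Nu F <->
     (well_posed N Nu F /\
      exists (C : R) (k : R -> R), 0 < C /\ Kinf k /\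
        forall x u, bounded_seq N x -> bounded_seq Nu u ->
          supnorm N (net_f F x u) <= C + k (supnorm N x) + k (supnorm Nu u)))
  /\
  (well_posed N Nu F <->
     exists (C : R) (k : R -> R), 0 < C /\ Kinf k /\
       forall i (x : 'rV[R]_(n i)) (xb : Xbar R n (I i)) (u : 'rV[R]_(p i)),
         N i (F i x xb u) <= C + k (N i x) + k (xbar_norm N xb) + k (Nu i u)).

move=> hn hp hN hNu hI hfin hF.
have iii_i : (exists (C : R) (k : R -> R), 0 < C /\ Kinf k /\
       forall i (x : 'rV[R]_(n i)) (xb : Xbar R n (I i)) (u : 'rV[R]_(p i)),
         N i (F i x xb u) <= C + k (N i x) + k (xbar_norm N xb) + k (Nu i u)) ->
    well_posed N Nu F.
  case=> C [k [C0 [hk hb]]] x u [Mx hMx] [Mu hMu].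
  have Mx0 : 0 <= Mx by apply: le_trans (hMx 0%N); exact: nrm_ge0.
  exists (C + k Mx + k Mx + k Mu) => i; rewrite /net_f.
  apply: le_trans (hb _ _ _ _) _.
  apply: lerD; [apply: lerD; [apply: lerD|]|].
  - exact: lexx.
  - exact: Kinf_mono hk (nrm_ge0 _ (hN i)) (hMx i).
  - apply: Kinf_mono hk (xbar_ge0 _ _) _.
    by apply: xbar_leP => // j; exact: hMx.
  - exact: Kinf_mono hk (nrm_ge0 _ (hNu i)) (hMu i).
split.
- split; last by case.
  move=> wp; split => //.
  have [C [k [C0 hk hb]]] := key hN hNu hI hfin hF wp.
  exists C, k; split => //; split => // x u bx bu.
  apply: supn_le => i; rewrite /net_f.
  apply: le_trans (hb _ _ _ _) _.
  set a := supnorm N x; set b := supnorm Nu u.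
  have h1 : N i (x i) <= a by exact: supn_ge.
  have a0 : 0 <= a by apply: le_trans (h1); exact: nrm_ge0.
  have h2 : xbar_norm N (@Defs.restrict R n (I i) x) <= a.
    by apply: xbar_leP => // j; exact: supn_ge.
  have h3 : Nu i (u i) <= b by exact: supn_ge.
  have b0 : 0 <= b by apply: le_trans (h3); exact: nrm_ge0.
  have hm : Num.max (N i (x i)) (Num.max (xbar_norm N (@Defs.restrict R n (I i) x)) (Nu i (u i)))
      <= Num.max a b by rewrite !ge_max !le_max h1 h2 h3 !orbT.
  have hm0 : 0 <= Num.max (N i (x i)) (Num.max (xbar_norm N (@Defs.restrict R n (I i) x)) (Nu i (u i))).
    by rewrite le_max nrm_ge0.
  rewrite -addrA; apply: lerD (lexx C) _.
  apply: le_trans (Kinf_mono hk hm0 hm) _.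
  exact: Kinf_max.
- split; last exact: iii_i.
  move=> wp; have [C [k [C0 hk hb]]] := key hN hNu hI hfin hF wp.
  exists C, k; split => //; split => // i x xb u.
  apply: le_trans (hb _ _ _ _) _.
  rewrite -!addrA; apply: lerD (lexx C) _.
  have x0 := nrm_ge0 x (hN i); have xb0 := xbar_ge0 N xb; have u0 := nrm_ge0 u (hNu i).
  apply: le_trans (Kinf_max hk x0 _) _; first by rewrite le_max xb0.
  apply: lerD (lexx _) _; exact: Kinf_max.
Qed.
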